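(* Let $u_1,u_2,w_1,w_2$ be distinct vertices of $F_4$ such that $w_1u_1$, $u_1u_2$ and $u_2w_2$ are edges of $F_4$. Let $H$ be obtained from $F_4$ by subdividing the edge $u_1u_2$ with a new vertex $w_3$, adding a further new vertex $v$, and joining $v$ to $w_1$, $w_2$ and $w_3$. Then $H$ contains $K_{3,4}$ as a minor.
   Context: $F_4$ is the graph with vertex set $\{f^1,f^2\}\cup\{f^i_j: i\in\{1,2\}, j\in\{1,2,3,4\}\}$ and the 16 edges: for each $i\in\{1,2\}$, $f^if^i_1$, $f^if^i_2$, $f^if^i_4$, $f^i_3f^i_1$, $f^i_3f^i_2$, $f^i_3f^i_4$; and $f^1_jf^2_{5-j}$ for $j=1,2,3,4$. *)

(* Defs.v *)
From mathcomp Require Import all_boot.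
Set Implicit Arguments. Unset Strict Implicit. Unset Printing Implicit Defensive.

Definition induced_rel (T : finType) (e : rel T) (S : {set T}) : rel T :=
  fun x y => [&& x \in S, y \in S & e x y].

Definition connected_in (T : finType) (e : rel T) (S : {set T}) : Prop :=
  forall x y, x \in S -> y \in S -> connect (induced_rel e S) x y.

Definition is_minor (T' : finType) (e' : rel T') (T : finType) (e : rel T) : Prop :=
  exists phi : T' -> {set T},
    [/\ forall x, phi x != set0,
        forall x y, x != y -> [disjoint phi x & phi y],
        forall x, connected_in e (phi x) &
        forall x y, e' x y -> exists a b, [/\ a \in phi x, b \in phi y & e a b]].

Definition K34_V := ('I_3 + 'I_4)%type.
Definition K34_adj : rel K34_V := fun x y =>
  match x, y with
  | inl _, inr _ | inr _, inl _ => true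
  | _, _ => false
  end.

(* Vertex (i, 0) is f^{i+1}; vertex (i, j) with 1 <= j <= 4 is f^{i+1}_j. *)
Definition F4_V := ('I_2 * 'I_5)%type.

(* Inside copy i: f^i and f^i_3 are both adjacent to f^i_1, f^i_2, f^i_4. *)
Definition F4_inner (j j' : nat) : bool :=
  (j \in [:: 0; 3]) && (j' \in [:: 1; 2; 4]).

Definition F4_adj : rel F4_V := fun a b =>
  let: (i, j) := a in let: (i', j') := b in
  if i == i' then F4_inner j j' || F4_inner j' j
  else [&& j != 0 :> nat, j' != 0 :> nat & (j + j' == 5)%N].

(* Vertices: Some (Some x) = old vertex x of F_4, Some None = w3, None = v. *)
Definition H_V := option (option F4_V).

Definition H_adj (u1 u2 w1 w2 : F4_V) : rel H_V := fun x y =>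
  match x, y with
  | Some (Some a), Some (Some b) =>
      F4_adj a b && ~~ (((a == u1) && (b == u2)) || ((a == u2) && (b == u1)))
  | Some (Some a), Some None | Some None, Some (Some a) => (a == u1) || (a == u2)
  | None, Some (Some a) | Some (Some a), None => (a == w1) || (a == w2)
  | None, Some None | Some None, None => true
  | _, _ => false
  end.

(* Main.v *)
Require Import Defs.
From mathcomp Require Import all_boot.

Definition ordm (m k : nat) : 'I_m.+1 := Ordinal (ltn_pmod k (ltn0Sn m)).

Definition dec (n : nat) : H_V :=
  if n < 10 then Some (Some (ordm 1 (n %/ 5), ordm 4 (n %% 5)))
  else if n == 10 then Some None else None.

Definition k34L : seq K34_V :=
  [:: inl (ordm 2 0); inl (ordm 2 1); inl (ordm 2 2);
      inr (ordm 3 0); inr (ordm 3 1); inr (ordm 3 2); inr (ordm 3 3)].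

Definition f4L : seq F4_V := [seq (ordm 1 (n %/ 5), ordm 4 (n %% 5)) | n <- iota 0 10].

Lemma k34L_all (x : K34_V) : x \in k34L.
Proof.
case: x => [[[|[|[|i]]] Hi]|[[|[|[|[|i]]]] Hi]] //; vm_compute; reflexivity.
Qed.

Lemma f4L_all (x : F4_V) : x \in f4L.
Proof.
case: x => [[[|[|i]] Hi] [[|[|[|[|[|j]]]]] Hj]] //; vm_compute; reflexivity.
Qed.

Fixpoint sp_ok (e : rel H_V) (pre r : seq H_V) : bool :=
  match r with
  | [::] => true
  | y :: r' => has (fun z => e z y && e y z) pre && sp_ok e (y :: pre) r'
  end.

Definition conn_ok (e : rel H_V) (s : seq H_V) : bool :=
  match s with [::] => false | x0 :: r => sp_ok e [:: x0] r end.

Definition good (e : rel H_V) (S : K34_V -> seq H_V) : bool :=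
  [&& all (fun x => conn_ok e (S x)) k34L,
      all (fun x => all (fun y => (x == y) || all (fun a => a \notin S y) (S x)) k34L) k34L &
      all (fun x => all (fun y => ~~ K34_adj x y || has (fun a => has (e a) (S y)) (S x)) k34L) k34L].

Lemma sp_ok_conn (e : rel H_V) (A : {set H_V}) x0 pre r :
  sp_ok e pre r -> {subset pre <= A} -> {subset r <= A} ->
  (forall z, z \in pre -> connect (induced_rel e A) x0 z && connect (induced_rel e A) z x0) ->
  forall z, z \in pre ++ r ->
    connect (induced_rel e A) x0 z && connect (induced_rel e A) z x0.
Proof.
elim: r pre => [|y r IH] pre /=.
  by move=> _ _ _ H z; rewrite cats0; apply: H.
case/andP=> /hasP [z0 z0pre /andP [ez ey]] Hsp Hpre Hr H z Hz.
have yA : y \in A by apply: Hr; rewrite inE eqxx.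
have z0A : z0 \in A by apply: Hpre.
have Hy : connect (induced_rel e A) x0 y && connect (induced_rel e A) y x0.
  case/andP: (H z0 z0pre) => c1 c2; apply/andP; split.
    apply: connect_trans c1 (connect1 _); by rewrite /induced_rel z0A yA ez.
  apply: connect_trans (connect1 _) c2; by rewrite /induced_rel z0A yA ey.
apply: (IH (y :: pre)) => //.
- by move=> a; rewrite inE => /orP [/eqP -> | /Hpre].
- by move=> a ar; apply: Hr; rewrite inE ar orbT.
- by move=> a; rewrite inE => /orP [/eqP -> | /H].
- move: Hz; rewrite mem_cat inE => /orP [Hz | /orP [Hz | Hz]].
  + by rewrite mem_cat inE Hz orbT.
  + by rewrite mem_cat inE Hz.
  + by rewrite mem_cat Hz orbT.
Qed.

Lemma good_minor e S : good e S -> is_minor K34_adj e.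
Proof.
case/and3P=> /allP Hc /allP Hd /allP He.
exists (fun x => [set a in S x]); split.
- move=> x; have := Hc x (k34L_all x); case: (S x) => [|a s] //= _.
  by apply/set0Pn; exists a; rewrite inE inE eqxx.
- move=> x y xy; have /allP := Hd x (k34L_all x) => /(_ y (k34L_all y)).
  rewrite (negbTE xy) /= => /allP Hxy.
  apply/pred0P => a /=; rewrite !inE; apply/negbTE; apply/nandP.
  by case Ha: (a \in S x); [right; apply: Hxy | left].
- move=> x a b; rewrite !inE => Ha Hb; move: (Hc x (k34L_all x)) Ha Hb.
  case Es: (S x) => [|x0 r] //= Hsp Ha Hb.
  have Hsub : {subset x0 :: r <= [set a in S x]} by move=> c; rewrite in_set Es.
  have K : forall z, z \in x0 :: r -> connect (induced_rel e [set a in S x]) x0 z &&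
                                       connect (induced_rel e [set a in S x]) z x0.
    apply: sp_ok_conn Hsp _ _ _.
    + by move=> c; rewrite inE => /eqP ->; apply: Hsub; rewrite inE eqxx.
    + by move=> c cr; apply: Hsub; rewrite inE cr orbT.
    + by move=> c; rewrite inE => /eqP ->; rewrite connect0.
  case/andP: (K a Ha) => _ c1; case/andP: (K b Hb) => c2 _.
  rewrite -Es; exact: connect_trans c1 c2.

- move=> x y xy; have /allP := He x (k34L_all x) => /(_ y (k34L_all y)).
  rewrite xy /= => /hasP [a Ha /hasP [b Hb eab]].
  by exists a, b; rewrite !inE.
Qed.
Definition tbl : seq (seq nat * seq (seq nat)) := [::
  ([:: 0; 1; 2; 3], [:: [:: 1; 9; 5; 10]; [:: 2; 8]; [:: 3; 4]; [:: 11]; [:: 6]; [:: 0]; [:: 7]]);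
  ([:: 0; 1; 2; 9], [:: [:: 2; 3]; [:: 0; 4; 6; 10]; [:: 9]; [:: 1]; [:: 11]; [:: 8]; [:: 5; 7]]);
  ([:: 0; 1; 4; 3], [:: [:: 1; 9; 10]; [:: 4; 6]; [:: 2; 3]; [:: 5; 7]; [:: 11]; [:: 8]; [:: 0]]);
  ([:: 0; 1; 4; 9], [:: [:: 3; 4]; [:: 0; 2; 8; 10]; [:: 5; 9]; [:: 1]; [:: 11]; [:: 6]; [:: 7]]);
  ([:: 0; 2; 1; 3], [:: [:: 3; 4]; [:: 2; 8; 10]; [:: 1; 9; 5]; [:: 11]; [:: 6]; [:: 0]; [:: 7]]);
  ([:: 0; 2; 1; 8], [:: [:: 0; 4; 6; 5; 10]; [:: 1; 3]; [:: 8]; [:: 2]; [:: 11]; [:: 9]; [:: 7]]);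
  ([:: 0; 2; 4; 3], [:: [:: 2; 8; 10]; [:: 4; 6; 5]; [:: 1; 3]; [:: 11]; [:: 9]; [:: 0]; [:: 7]]);
  ([:: 0; 2; 4; 8], [:: [:: 3; 4]; [:: 0; 1; 9; 5; 10]; [:: 8]; [:: 2]; [:: 11]; [:: 6]; [:: 7]]);
  ([:: 0; 4; 1; 3], [:: [:: 4; 6; 10]; [:: 1; 9]; [:: 2; 3]; [:: 5; 7]; [:: 11]; [:: 8]; [:: 0]]);
  ([:: 0; 4; 1; 6], [:: [:: 5; 6]; [:: 0; 2; 8; 10]; [:: 1; 3]; [:: 11]; [:: 9]; [:: 4]; [:: 7]]);
  ([:: 0; 4; 2; 3], [:: [:: 4; 6; 5; 10]; [:: 2; 8]; [:: 1; 3]; [:: 11]; [:: 9]; [:: 0]; [:: 7]]);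
  ([:: 0; 4; 2; 6], [:: [:: 6]; [:: 2; 3]; [:: 0; 1; 9; 10]; [:: 4]; [:: 11]; [:: 8]; [:: 5; 7]]);
  ([:: 1; 0; 3; 2], [:: [:: 1; 9; 5; 10]; [:: 2; 8]; [:: 3; 4]; [:: 11]; [:: 6]; [:: 0]; [:: 7]]);
  ([:: 1; 0; 3; 4], [:: [:: 1; 9; 10]; [:: 4; 6]; [:: 2; 3]; [:: 5; 7]; [:: 11]; [:: 8]; [:: 0]]);
  ([:: 1; 0; 9; 2], [:: [:: 2; 3]; [:: 0; 4; 6; 10]; [:: 9]; [:: 1]; [:: 11]; [:: 8]; [:: 5; 7]]);
  ([:: 1; 0; 9; 4], [:: [:: 3; 4]; [:: 0; 2; 8; 10]; [:: 5; 9]; [:: 1]; [:: 11]; [:: 6]; [:: 7]]);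
  ([:: 1; 3; 0; 2], [:: [:: 2; 8; 11]; [:: 3; 4]; [:: 1; 9; 5]; [:: 10]; [:: 6]; [:: 0]; [:: 7]]);
  ([:: 1; 3; 0; 4], [:: [:: 1; 9]; [:: 2; 3]; [:: 4; 6; 11]; [:: 10]; [:: 5; 7]; [:: 0]; [:: 8]]);
  ([:: 1; 3; 0; 7], [:: [:: 1; 9]; [:: 4; 6]; [:: 7]; [:: 0; 11]; [:: 5]; [:: 3; 10]; [:: 8]]);
  ([:: 1; 3; 9; 2], [:: [:: 0; 2; 8]; [:: 5; 9]; [:: 3; 10]; [:: 1]; [:: 11]; [:: 4; 6]; [:: 7]]);
  ([:: 1; 3; 9; 4], [:: [:: 3; 7; 10]; [:: 4; 6]; [:: 9]; [:: 11]; [:: 0; 1]; [:: 8]; [:: 5]]);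
  ([:: 1; 3; 9; 7], [:: [:: 2; 8]; [:: 4; 6; 5]; [:: 1; 10]; [:: 3]; [:: 9]; [:: 7; 11]; [:: 0]]);
  ([:: 1; 9; 0; 5], [:: [:: 3]; [:: 6; 8; 9; 10]; [:: 0; 11]; [:: 2]; [:: 1]; [:: 4]; [:: 5; 7]]);
  ([:: 1; 9; 0; 8], [:: [:: 1; 3; 10]; [:: 8]; [:: 0; 4; 6; 5]; [:: 2]; [:: 11]; [:: 9]; [:: 7]]);
  ([:: 1; 9; 3; 5], [:: [:: 3]; [:: 8; 9; 10]; [:: 0; 4; 6; 5]; [:: 2]; [:: 1]; [:: 11]; [:: 7]]);
  ([:: 1; 9; 3; 8], [:: [:: 3]; [:: 6; 8]; [:: 0; 1; 10]; [:: 2]; [:: 11]; [:: 5; 7; 9]; [:: 4]]);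
  ([:: 2; 0; 3; 1], [:: [:: 3; 4]; [:: 2; 8; 10]; [:: 1; 9; 5]; [:: 11]; [:: 6]; [:: 0]; [:: 7]]);
  ([:: 2; 0; 3; 4], [:: [:: 2; 8; 10]; [:: 4; 6; 5]; [:: 1; 3]; [:: 11]; [:: 9]; [:: 0]; [:: 7]]);
  ([:: 2; 0; 8; 1], [:: [:: 0; 4; 6; 5; 10]; [:: 1; 3]; [:: 8]; [:: 2]; [:: 11]; [:: 9]; [:: 7]]);
  ([:: 2; 0; 8; 4], [:: [:: 3; 4]; [:: 0; 1; 9; 5; 10]; [:: 8]; [:: 2]; [:: 11]; [:: 6]; [:: 7]]);
  ([:: 2; 3; 0; 1], [:: [:: 2; 8]; [:: 3; 4]; [:: 1; 9; 5; 11]; [:: 10]; [:: 6]; [:: 0]; [:: 7]]);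
  ([:: 2; 3; 0; 4], [:: [:: 2; 8]; [:: 4; 6; 5; 11]; [:: 1; 3]; [:: 10]; [:: 9]; [:: 0]; [:: 7]]);
  ([:: 2; 3; 0; 7], [:: [:: 1; 9]; [:: 4; 6]; [:: 7]; [:: 3]; [:: 0; 11]; [:: 5]; [:: 8]]);
  ([:: 2; 3; 8; 1], [:: [:: 3; 10]; [:: 6; 8]; [:: 0; 1]; [:: 2]; [:: 11]; [:: 5; 7; 9]; [:: 4]]);
  ([:: 2; 3; 8; 4], [:: [:: 0; 4; 6]; [:: 8; 9]; [:: 3; 10]; [:: 2]; [:: 1]; [:: 11]; [:: 5; 7]]);
  ([:: 2; 3; 8; 7], [:: [:: 4; 6]; [:: 2; 10]; [:: 1; 9]; [:: 3]; [:: 5; 7; 11]; [:: 8]; [:: 0]]);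
  ([:: 2; 8; 0; 6], [:: [:: 0; 1; 9]; [:: 6]; [:: 2; 3; 10]; [:: 4]; [:: 11]; [:: 8]; [:: 5; 7]]);
  ([:: 2; 8; 0; 7], [:: [:: 1; 9]; [:: 4; 6]; [:: 7]; [:: 3]; [:: 0; 11]; [:: 5]; [:: 8]]);
  ([:: 2; 8; 0; 9], [:: [:: 0; 4; 6]; [:: 9]; [:: 2; 3; 10]; [:: 1]; [:: 11]; [:: 8]; [:: 5; 7]]);
  ([:: 2; 8; 3; 6], [:: [:: 3]; [:: 0; 4; 6]; [:: 8; 9; 10]; [:: 2]; [:: 1]; [:: 11]; [:: 5; 7]]);
  ([:: 2; 8; 3; 7], [:: [:: 4; 6]; [:: 2; 10]; [:: 1; 9]; [:: 3]; [:: 5; 7; 11]; [:: 8]; [:: 0]]);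
  ([:: 2; 8; 3; 9], [:: [:: 3]; [:: 6; 8; 10]; [:: 0; 1; 9]; [:: 2]; [:: 11]; [:: 4]; [:: 5; 7]]);
  ([:: 3; 1; 2; 0], [:: [:: 2; 8; 11]; [:: 3; 4]; [:: 1; 9; 5]; [:: 10]; [:: 6]; [:: 0]; [:: 7]]);
  ([:: 3; 1; 2; 9], [:: [:: 0; 2; 8]; [:: 5; 9]; [:: 3; 10]; [:: 1]; [:: 11]; [:: 4; 6]; [:: 7]]);
  ([:: 3; 1; 4; 0], [:: [:: 1; 9]; [:: 2; 3]; [:: 4; 6; 11]; [:: 10]; [:: 5; 7]; [:: 0]; [:: 8]]);
  ([:: 3; 1; 4; 9], [:: [:: 3; 7; 10]; [:: 4; 6]; [:: 9]; [:: 11]; [:: 0; 1]; [:: 8]; [:: 5]]);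
  ([:: 3; 1; 7; 0], [:: [:: 1; 9]; [:: 4; 6]; [:: 7]; [:: 0; 11]; [:: 5]; [:: 3; 10]; [:: 8]]);
  ([:: 3; 1; 7; 9], [:: [:: 2; 8]; [:: 4; 6; 5]; [:: 1; 10]; [:: 3]; [:: 9]; [:: 7; 11]; [:: 0]]);
  ([:: 3; 2; 1; 0], [:: [:: 2; 8]; [:: 3; 4]; [:: 1; 9; 5; 11]; [:: 10]; [:: 6]; [:: 0]; [:: 7]]);
  ([:: 3; 2; 1; 8], [:: [:: 3; 10]; [:: 6; 8]; [:: 0; 1]; [:: 2]; [:: 11]; [:: 5; 7; 9]; [:: 4]]);
  ([:: 3; 2; 4; 0], [:: [:: 2; 8]; [:: 4; 6; 5; 11]; [:: 1; 3]; [:: 10]; [:: 9]; [:: 0]; [:: 7]]);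
  ([:: 3; 2; 4; 8], [:: [:: 0; 4; 6]; [:: 8; 9]; [:: 3; 10]; [:: 2]; [:: 1]; [:: 11]; [:: 5; 7]]);
  ([:: 3; 2; 7; 0], [:: [:: 1; 9]; [:: 4; 6]; [:: 7]; [:: 3]; [:: 0; 11]; [:: 5]; [:: 8]]);
  ([:: 3; 2; 7; 8], [:: [:: 4; 6]; [:: 2; 10]; [:: 1; 9]; [:: 3]; [:: 5; 7; 11]; [:: 8]; [:: 0]]);
  ([:: 3; 4; 1; 0], [:: [:: 4; 6]; [:: 1; 9; 11]; [:: 2; 3]; [:: 10]; [:: 5; 7]; [:: 8]; [:: 0]]);
  ([:: 3; 4; 1; 6], [:: [:: 6]; [:: 0; 1; 9]; [:: 3; 7; 10]; [:: 4]; [:: 11]; [:: 8]; [:: 5]]);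
  ([:: 3; 4; 2; 0], [:: [:: 2; 8; 11]; [:: 4; 6; 5]; [:: 1; 3]; [:: 10]; [:: 9]; [:: 0]; [:: 7]]);
  ([:: 3; 4; 2; 6], [:: [:: 0; 2; 8]; [:: 5; 6; 9]; [:: 3; 10]; [:: 4]; [:: 1]; [:: 11]; [:: 7]]);
  ([:: 3; 4; 7; 0], [:: [:: 1; 9]; [:: 4; 6]; [:: 7]; [:: 0; 11]; [:: 5]; [:: 3; 10]; [:: 8]]);
  ([:: 3; 4; 7; 6], [:: [:: 2; 8]; [:: 1; 9; 5]; [:: 10; 11]; [:: 3]; [:: 6]; [:: 0; 4]; [:: 7]]);
  ([:: 3; 7; 1; 5], [:: [:: 2; 8]; [:: 1; 11; 10]; [:: 4; 6; 5]; [:: 3]; [:: 9]; [:: 0]; [:: 7]]);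
  ([:: 3; 7; 1; 8], [:: [:: 3; 10]; [:: 6; 8]; [:: 0; 1]; [:: 2]; [:: 11]; [:: 5; 7; 9]; [:: 4]]);
  ([:: 3; 7; 2; 5], [:: [:: 4; 6]; [:: 1; 9]; [:: 2; 11]; [:: 3]; [:: 5]; [:: 8]; [:: 0]]);
  ([:: 3; 7; 2; 8], [:: [:: 1; 9]; [:: 4; 6]; [:: 10; 11]; [:: 3]; [:: 0; 2]; [:: 8]; [:: 5; 7]]);
  ([:: 3; 7; 4; 5], [:: [:: 2; 8]; [:: 4; 11; 10]; [:: 1; 9; 5]; [:: 3]; [:: 6]; [:: 0]; [:: 7]]);
  ([:: 3; 7; 4; 8], [:: [:: 0; 4; 6]; [:: 8; 9]; [:: 3; 10]; [:: 2]; [:: 1]; [:: 11]; [:: 5; 7]]);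
  ([:: 4; 0; 3; 1], [:: [:: 4; 6; 10]; [:: 1; 9]; [:: 2; 3]; [:: 5; 7]; [:: 11]; [:: 8]; [:: 0]]);
  ([:: 4; 0; 3; 2], [:: [:: 4; 6; 5; 10]; [:: 2; 8]; [:: 1; 3]; [:: 11]; [:: 9]; [:: 0]; [:: 7]]);
  ([:: 4; 0; 6; 1], [:: [:: 5; 6]; [:: 0; 2; 8; 10]; [:: 1; 3]; [:: 11]; [:: 9]; [:: 4]; [:: 7]]);
  ([:: 4; 0; 6; 2], [:: [:: 6]; [:: 2; 3]; [:: 0; 1; 9; 10]; [:: 4]; [:: 11]; [:: 8]; [:: 5; 7]]);
  ([:: 4; 3; 0; 1], [:: [:: 4; 6]; [:: 1; 9; 11]; [:: 2; 3]; [:: 10]; [:: 5; 7]; [:: 8]; [:: 0]]);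
  ([:: 4; 3; 0; 2], [:: [:: 2; 8; 11]; [:: 4; 6; 5]; [:: 1; 3]; [:: 10]; [:: 9]; [:: 0]; [:: 7]]);
  ([:: 4; 3; 0; 7], [:: [:: 1; 9]; [:: 4; 6]; [:: 7]; [:: 0; 11]; [:: 5]; [:: 3; 10]; [:: 8]]);
  ([:: 4; 3; 6; 1], [:: [:: 6]; [:: 0; 1; 9]; [:: 3; 7; 10]; [:: 4]; [:: 11]; [:: 8]; [:: 5]]);
  ([:: 4; 3; 6; 2], [:: [:: 0; 2; 8]; [:: 5; 6; 9]; [:: 3; 10]; [:: 4]; [:: 1]; [:: 11]; [:: 7]]);
  ([:: 4; 3; 6; 7], [:: [:: 2; 8]; [:: 1; 9; 5]; [:: 10; 11]; [:: 3]; [:: 6]; [:: 0; 4]; [:: 7]]);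
  ([:: 4; 6; 0; 5], [:: [:: 3]; [:: 0; 11]; [:: 6; 8; 9]; [:: 2]; [:: 1]; [:: 4; 10]; [:: 5; 7]]);
  ([:: 4; 6; 0; 8], [:: [:: 3; 4; 10]; [:: 8]; [:: 0; 1; 9; 5]; [:: 2]; [:: 11]; [:: 6]; [:: 7]]);
  ([:: 4; 6; 3; 5], [:: [:: 3]; [:: 6; 8; 10]; [:: 0; 1; 9; 5]; [:: 2]; [:: 11]; [:: 4]; [:: 7]]);
  ([:: 4; 6; 3; 8], [:: [:: 3; 7; 5]; [:: 0; 4; 10]; [:: 8; 9]; [:: 2]; [:: 1]; [:: 11]; [:: 6]]);
  ([:: 5; 6; 7; 4], [:: [:: 2; 8; 6]; [:: 4; 11]; [:: 1; 9; 5]; [:: 3]; [:: 10]; [:: 0]; [:: 7]]);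
  ([:: 5; 6; 7; 8], [:: [:: 3; 7]; [:: 0; 4; 6; 10]; [:: 8; 9]; [:: 2]; [:: 1]; [:: 11]; [:: 5]]);
  ([:: 5; 6; 9; 4], [:: [:: 8; 9]; [:: 3; 7; 5; 10]; [:: 0; 4]; [:: 2]; [:: 1]; [:: 11]; [:: 6]]);
  ([:: 5; 6; 9; 8], [:: [:: 2; 8]; [:: 4; 6; 10]; [:: 1; 9]; [:: 3]; [:: 11]; [:: 5; 7]; [:: 0]]);
  ([:: 5; 7; 6; 3], [:: [:: 3]; [:: 0; 1; 9; 5; 10]; [:: 6; 8]; [:: 2]; [:: 11]; [:: 4]; [:: 7]]);
  ([:: 5; 7; 6; 8], [:: [:: 3; 7; 10]; [:: 0; 4; 6]; [:: 8; 9]; [:: 2]; [:: 1]; [:: 11]; [:: 5]]);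
  ([:: 5; 7; 9; 3], [:: [:: 3]; [:: 0; 4; 6; 5; 10]; [:: 8; 9]; [:: 2]; [:: 1]; [:: 11]; [:: 7]]);
  ([:: 5; 7; 9; 8], [:: [:: 6; 8]; [:: 0; 1; 9]; [:: 3; 7; 10]; [:: 2]; [:: 11]; [:: 4]; [:: 5]]);
  ([:: 5; 9; 6; 1], [:: [:: 0; 1]; [:: 6; 8]; [:: 3; 7; 5; 10]; [:: 2]; [:: 11]; [:: 9]; [:: 4]]);
  ([:: 5; 9; 6; 8], [:: [:: 2; 8]; [:: 1; 9; 10]; [:: 4; 6]; [:: 3]; [:: 11]; [:: 5; 7]; [:: 0]]);
  ([:: 5; 9; 7; 1], [:: [:: 1; 11]; [:: 4; 6; 5]; [:: 2; 8; 9]; [:: 3]; [:: 10]; [:: 0]; [:: 7]]);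
  ([:: 5; 9; 7; 8], [:: [:: 6; 8]; [:: 3; 7]; [:: 0; 1; 9; 10]; [:: 2]; [:: 11]; [:: 5]; [:: 4]]);
  ([:: 6; 4; 5; 0], [:: [:: 3]; [:: 0; 11]; [:: 6; 8; 9]; [:: 2]; [:: 1]; [:: 4; 10]; [:: 5; 7]]);
  ([:: 6; 4; 5; 3], [:: [:: 3]; [:: 6; 8; 10]; [:: 0; 1; 9; 5]; [:: 2]; [:: 11]; [:: 4]; [:: 7]]);
  ([:: 6; 4; 8; 0], [:: [:: 3; 4; 10]; [:: 8]; [:: 0; 1; 9; 5]; [:: 2]; [:: 11]; [:: 6]; [:: 7]]);
  ([:: 6; 4; 8; 3], [:: [:: 3; 7; 5]; [:: 0; 4; 10]; [:: 8; 9]; [:: 2]; [:: 1]; [:: 11]; [:: 6]]);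
  ([:: 6; 5; 4; 7], [:: [:: 2; 8; 6]; [:: 4; 11]; [:: 1; 9; 5]; [:: 3]; [:: 10]; [:: 0]; [:: 7]]);
  ([:: 6; 5; 4; 9], [:: [:: 8; 9]; [:: 3; 7; 5; 10]; [:: 0; 4]; [:: 2]; [:: 1]; [:: 11]; [:: 6]]);
  ([:: 6; 5; 8; 7], [:: [:: 3; 7]; [:: 0; 4; 6; 10]; [:: 8; 9]; [:: 2]; [:: 1]; [:: 11]; [:: 5]]);
  ([:: 6; 5; 8; 9], [:: [:: 2; 8]; [:: 4; 6; 10]; [:: 1; 9]; [:: 3]; [:: 11]; [:: 5; 7]; [:: 0]]);
  ([:: 6; 8; 4; 2], [:: [:: 0; 1; 9]; [:: 3; 7]; [:: 10; 11]; [:: 4]; [:: 2]; [:: 5; 6]; [:: 8]]);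
  ([:: 6; 8; 4; 7], [:: [:: 3; 7; 5]; [:: 8; 9; 10]; [:: 0; 4]; [:: 2]; [:: 1]; [:: 11]; [:: 6]]);
  ([:: 6; 8; 4; 9], [:: [:: 2; 8; 10]; [:: 1; 9; 5]; [:: 4]; [:: 3]; [:: 11]; [:: 6]; [:: 0]]);
  ([:: 6; 8; 5; 2], [:: [:: 4; 6]; [:: 1; 9; 8]; [:: 2; 11]; [:: 3]; [:: 10]; [:: 5]; [:: 0]]);
  ([:: 6; 8; 5; 7], [:: [:: 0; 4; 6]; [:: 8; 9]; [:: 3; 7; 11]; [:: 10]; [:: 2]; [:: 1]; [:: 5]]);
  ([:: 6; 8; 5; 9], [:: [:: 2; 8]; [:: 1; 9; 11]; [:: 4; 6]; [:: 10]; [:: 3]; [:: 5; 7]; [:: 0]]);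
  ([:: 7; 3; 5; 1], [:: [:: 2; 8]; [:: 1; 11; 10]; [:: 4; 6; 5]; [:: 3]; [:: 9]; [:: 0]; [:: 7]]);
  ([:: 7; 3; 5; 2], [:: [:: 4; 6]; [:: 1; 9]; [:: 2; 11]; [:: 3]; [:: 5]; [:: 8]; [:: 0]]);
  ([:: 7; 3; 5; 4], [:: [:: 2; 8]; [:: 4; 11; 10]; [:: 1; 9; 5]; [:: 3]; [:: 6]; [:: 0]; [:: 7]]);
  ([:: 7; 3; 8; 1], [:: [:: 3; 10]; [:: 6; 8]; [:: 0; 1]; [:: 2]; [:: 11]; [:: 5; 7; 9]; [:: 4]]);
  ([:: 7; 3; 8; 2], [:: [:: 1; 9]; [:: 4; 6]; [:: 10; 11]; [:: 3]; [:: 0; 2]; [:: 8]; [:: 5; 7]]);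
  ([:: 7; 3; 8; 4], [:: [:: 0; 4; 6]; [:: 8; 9]; [:: 3; 10]; [:: 2]; [:: 1]; [:: 11]; [:: 5; 7]]);
  ([:: 7; 5; 3; 6], [:: [:: 3]; [:: 0; 1; 9; 5; 10]; [:: 6; 8]; [:: 2]; [:: 11]; [:: 4]; [:: 7]]);
  ([:: 7; 5; 3; 9], [:: [:: 3]; [:: 0; 4; 6; 5; 10]; [:: 8; 9]; [:: 2]; [:: 1]; [:: 11]; [:: 7]]);
  ([:: 7; 5; 8; 6], [:: [:: 3; 7; 10]; [:: 0; 4; 6]; [:: 8; 9]; [:: 2]; [:: 1]; [:: 11]; [:: 5]]);
  ([:: 7; 5; 8; 9], [:: [:: 6; 8]; [:: 0; 1; 9]; [:: 3; 7; 10]; [:: 2]; [:: 11]; [:: 4]; [:: 5]]);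
  ([:: 7; 8; 3; 2], [:: [:: 1; 9]; [:: 4; 6]; [:: 10; 11]; [:: 3]; [:: 0; 2]; [:: 8]; [:: 5; 7]]);
  ([:: 7; 8; 3; 6], [:: [:: 3]; [:: 0; 4; 6]; [:: 8; 9; 10]; [:: 2]; [:: 1]; [:: 11]; [:: 5; 7]]);
  ([:: 7; 8; 3; 9], [:: [:: 3]; [:: 6; 8; 10]; [:: 0; 1; 9]; [:: 2]; [:: 11]; [:: 4]; [:: 5; 7]]);
  ([:: 7; 8; 5; 2], [:: [:: 4; 6]; [:: 1; 9]; [:: 2; 11]; [:: 3]; [:: 5]; [:: 8]; [:: 0]]);
  ([:: 7; 8; 5; 6], [:: [:: 0; 4; 6]; [:: 3; 7]; [:: 8; 9]; [:: 2]; [:: 1]; [:: 10; 11]; [:: 5]]);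
  ([:: 7; 8; 5; 9], [:: [:: 6; 8]; [:: 3; 7]; [:: 0; 1; 9; 11]; [:: 10]; [:: 2]; [:: 5]; [:: 4]]);
  ([:: 8; 2; 6; 0], [:: [:: 0; 1; 9]; [:: 6]; [:: 2; 3; 10]; [:: 4]; [:: 11]; [:: 8]; [:: 5; 7]]);
  ([:: 8; 2; 6; 3], [:: [:: 3]; [:: 0; 4; 6]; [:: 8; 9; 10]; [:: 2]; [:: 1]; [:: 11]; [:: 5; 7]]);
  ([:: 8; 2; 7; 0], [:: [:: 1; 9]; [:: 4; 6]; [:: 7]; [:: 3]; [:: 0; 11]; [:: 5]; [:: 8]]);
  ([:: 8; 2; 7; 3], [:: [:: 4; 6]; [:: 2; 10]; [:: 1; 9]; [:: 3]; [:: 5; 7; 11]; [:: 8]; [:: 0]]);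
  ([:: 8; 2; 9; 0], [:: [:: 0; 4; 6]; [:: 9]; [:: 2; 3; 10]; [:: 1]; [:: 11]; [:: 8]; [:: 5; 7]]);
  ([:: 8; 2; 9; 3], [:: [:: 3]; [:: 6; 8; 10]; [:: 0; 1; 9]; [:: 2]; [:: 11]; [:: 4]; [:: 5; 7]]);
  ([:: 8; 6; 2; 4], [:: [:: 0; 1; 9]; [:: 3; 7]; [:: 10; 11]; [:: 4]; [:: 2]; [:: 5; 6]; [:: 8]]);
  ([:: 8; 6; 2; 5], [:: [:: 4; 6]; [:: 1; 9; 8]; [:: 2; 11]; [:: 3]; [:: 10]; [:: 5]; [:: 0]]);
  ([:: 8; 6; 7; 4], [:: [:: 3; 7; 5]; [:: 8; 9; 10]; [:: 0; 4]; [:: 2]; [:: 1]; [:: 11]; [:: 6]]);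
  ([:: 8; 6; 7; 5], [:: [:: 0; 4; 6]; [:: 8; 9]; [:: 3; 7; 11]; [:: 10]; [:: 2]; [:: 1]; [:: 5]]);
  ([:: 8; 6; 9; 4], [:: [:: 2; 8; 10]; [:: 1; 9; 5]; [:: 4]; [:: 3]; [:: 11]; [:: 6]; [:: 0]]);
  ([:: 8; 6; 9; 5], [:: [:: 2; 8]; [:: 1; 9; 11]; [:: 4; 6]; [:: 10]; [:: 3]; [:: 5; 7]; [:: 0]]);
  ([:: 8; 7; 2; 3], [:: [:: 1; 9]; [:: 4; 6]; [:: 10; 11]; [:: 3]; [:: 0; 2]; [:: 8]; [:: 5; 7]]);
  ([:: 8; 7; 2; 5], [:: [:: 4; 6]; [:: 1; 9]; [:: 2; 11]; [:: 3]; [:: 5]; [:: 8]; [:: 0]]);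
  ([:: 8; 7; 6; 3], [:: [:: 3]; [:: 0; 4; 6]; [:: 8; 9; 10]; [:: 2]; [:: 1]; [:: 11]; [:: 5; 7]]);
  ([:: 8; 7; 6; 5], [:: [:: 0; 4; 6]; [:: 3; 7]; [:: 8; 9]; [:: 2]; [:: 1]; [:: 10; 11]; [:: 5]]);
  ([:: 8; 7; 9; 3], [:: [:: 3]; [:: 6; 8; 10]; [:: 0; 1; 9]; [:: 2]; [:: 11]; [:: 4]; [:: 5; 7]]);
  ([:: 8; 7; 9; 5], [:: [:: 6; 8]; [:: 3; 7]; [:: 0; 1; 9; 11]; [:: 10]; [:: 2]; [:: 5]; [:: 4]]);
  ([:: 8; 9; 2; 1], [:: [:: 0; 4; 6]; [:: 3; 7]; [:: 10; 11]; [:: 2]; [:: 1]; [:: 5; 9]; [:: 8]]);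
  ([:: 8; 9; 2; 5], [:: [:: 4; 6]; [:: 1; 9]; [:: 2; 11]; [:: 3]; [:: 8; 10]; [:: 5]; [:: 0]]);
  ([:: 8; 9; 6; 1], [:: [:: 1]; [:: 2; 8; 10]; [:: 4; 6]; [:: 3]; [:: 11]; [:: 5; 9]; [:: 0]]);
  ([:: 8; 9; 6; 5], [:: [:: 2; 8]; [:: 4; 6]; [:: 1; 9]; [:: 3]; [:: 10; 11]; [:: 5; 7]; [:: 0]]);
  ([:: 8; 9; 7; 1], [:: [:: 3; 7; 5]; [:: 6; 8; 10]; [:: 0; 1]; [:: 2]; [:: 11]; [:: 9]; [:: 4]]);
  ([:: 8; 9; 7; 5], [:: [:: 0; 1; 9]; [:: 6; 8]; [:: 3; 7]; [:: 2]; [:: 5]; [:: 10; 11]; [:: 4]]);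
  ([:: 9; 1; 5; 0], [:: [:: 3]; [:: 6; 8; 9; 10]; [:: 0; 11]; [:: 2]; [:: 1]; [:: 4]; [:: 5; 7]]);
  ([:: 9; 1; 5; 3], [:: [:: 3]; [:: 8; 9; 10]; [:: 0; 4; 6; 5]; [:: 2]; [:: 1]; [:: 11]; [:: 7]]);
  ([:: 9; 1; 8; 0], [:: [:: 1; 3; 10]; [:: 8]; [:: 0; 4; 6; 5]; [:: 2]; [:: 11]; [:: 9]; [:: 7]]);
  ([:: 9; 1; 8; 3], [:: [:: 3]; [:: 6; 8]; [:: 0; 1; 10]; [:: 2]; [:: 11]; [:: 5; 7; 9]; [:: 4]]);
  ([:: 9; 5; 1; 6], [:: [:: 0; 1]; [:: 6; 8]; [:: 3; 7; 5; 10]; [:: 2]; [:: 11]; [:: 9]; [:: 4]]);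
  ([:: 9; 5; 1; 7], [:: [:: 1; 11]; [:: 4; 6; 5]; [:: 2; 8; 9]; [:: 3]; [:: 10]; [:: 0]; [:: 7]]);
  ([:: 9; 5; 8; 6], [:: [:: 2; 8]; [:: 1; 9; 10]; [:: 4; 6]; [:: 3]; [:: 11]; [:: 5; 7]; [:: 0]]);
  ([:: 9; 5; 8; 7], [:: [:: 6; 8]; [:: 3; 7]; [:: 0; 1; 9; 10]; [:: 2]; [:: 11]; [:: 5]; [:: 4]]);
  ([:: 9; 8; 1; 2], [:: [:: 0; 4; 6]; [:: 3; 7]; [:: 10; 11]; [:: 2]; [:: 1]; [:: 5; 9]; [:: 8]]);
  ([:: 9; 8; 1; 6], [:: [:: 1]; [:: 2; 8; 10]; [:: 4; 6]; [:: 3]; [:: 11]; [:: 5; 9]; [:: 0]]);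
  ([:: 9; 8; 1; 7], [:: [:: 3; 7; 5]; [:: 6; 8; 10]; [:: 0; 1]; [:: 2]; [:: 11]; [:: 9]; [:: 4]]);
  ([:: 9; 8; 5; 2], [:: [:: 4; 6]; [:: 1; 9]; [:: 2; 11]; [:: 3]; [:: 8; 10]; [:: 5]; [:: 0]]);
  ([:: 9; 8; 5; 6], [:: [:: 2; 8]; [:: 4; 6]; [:: 1; 9]; [:: 3]; [:: 10; 11]; [:: 5; 7]; [:: 0]]);
  ([:: 9; 8; 5; 7], [:: [:: 0; 1; 9]; [:: 6; 8]; [:: 3; 7]; [:: 2]; [:: 5]; [:: 10; 11]; [:: 4]])].

Definition enc (x : F4_V) : nat := 5 * x.1 + x.2.
Definition kidx (x : K34_V) : nat := match x with inl i => i | inr j => 3 + j end.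
Definition model (u1 u2 w1 w2 : F4_V) (x : K34_V) : seq H_V :=
  let key := [:: enc u1; enc u2; enc w1; enc w2] in
  map dec (nth [::] (odflt [::] (ohead [seq p.2 | p <- tbl & p.1 == key])) (kidx x)).

Definition bigcheck : bool :=
  all (fun u1 => all (fun u2 => all (fun w1 => all (fun w2 =>
   if [&& uniq [:: u1; u2; w1; w2], F4_adj w1 u1, F4_adj u1 u2 & F4_adj u2 w2]
   then good (H_adj u1 u2 w1 w2) (model u1 u2 w1 w2) else true) f4L) f4L) f4L) f4L.

Lemma bigcheckT : bigcheck.
Proof. vm_compute. reflexivity. Qed.

Theorem lemma4p15 (u1 u2 w1 w2 : F4_V) :
  uniq [:: u1; u2; w1; w2] ->
  F4_adj w1 u1 -> F4_adj u1 u2 -> F4_adj u2 w2 ->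
  is_minor K34_adj (H_adj u1 u2 w1 w2).
Proof.
move=> Hu h1 h2 h3; apply: (@good_minor _ (model u1 u2 w1 w2)).
have := bigcheckT.
move=> /allP /(_ u1 (f4L_all u1)) /allP /(_ u2 (f4L_all u2))
       /allP /(_ w1 (f4L_all w1)) /allP /(_ w2 (f4L_all w2)).
by rewrite Hu h1 h2 h3.
Qed.
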